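(* Let $\mathcal R$ be a sum-bucket game and $\mathbf p$ a routing. If a greedy move by player $i$ takes $\mathbf p$ to a routing $\mathbf p'$, then $\mathbf p'<\mathbf p$ in the order defined below (i.e. $M(\mathbf p')<M(\mathbf p)$).
   Context: A routing game $(\mathbf N,G,\mathcal P)$: players $\{1,\dots,N\}$ ($N\ge1$), a finite graph $G=(V,E)$, and for each player $i$ a nonempty finite set $\mathcal P_i$ of paths (each with at least one edge) from $u_i$ to $v_i$; $\mathcal P=\bigcup_i\mathcal P_i$, $L=\max_{p\in\mathcal P}|p|$ (number of edges). A routing is $\mathbf p=[p_1,\dots,p_N]$ with $p_i\in\mathcal P_i$; $(p_i';\mathbf p_{-i})$ replaces $p_i$ by $p_i'$. Sum-bucket game: for $k=0,1,\dots,\lceil\lg L\rceil$ the bucket $B_k$ is the set of paths in $\mathcal P$ with length in $[2^k,2^{k+1})$, and $B(q)$ is the index of the bucket of path $q$. The normalized length of a path $q$ is $\overline D_q=2^{B(q)+1}-1$. For a routing $\mathbf p$, an edge $e$ and a path $q$, $\overline C_{e,q}(\mathbf p)$ is the number of players $j$ with $e\in p_j$ and $B(p_j)=B(q)$, and $\overline C_q(\mathbf p)=\max_{e\in q}\overline C_{e,q}(\mathbf p)$. Player cost: $pc_i(\mathbf p)=\overline C_i(\mathbf p)+\overline D_i(\mathbf p)$ with $\overline C_i=\overline C_{p_i}$, $\overline D_i=\overline D_{p_i}$. A greedy move by player $i$ takes $\mathbf p$ to $(p_i';\mathbf p_{-i})$ with $p_i'\in\mathcal P_i$ and strictly smaller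 $pc_i$. Order: $r=N+2L-1$; $M(\mathbf p)=[m_1(\mathbf p),\dots,m_r(\mathbf p)]$ where $m_j(\mathbf p)$ is the number of players with cost $j$ in $\mathbf p$; $M(\mathbf p')<M(\mathbf p)$ if there is $j$ with $m_k(\mathbf p')=m_k(\mathbf p)$ for all $k>j$ and $m_j(\mathbf p')<m_j(\mathbf p)$. *)

(* Defs.v *)
From mathcomp Require Import all_boot.
Set Implicit Arguments. Unset Strict Implicit. Unset Printing Implicit Defensive.

(* Graph: finite vertex type V, finite edge type E (multigraph allowed),
   each edge with endpoints [ends e]; edges are traversable in either direction. *)
Section Routing.
Variables (V E : finType) (ends : E -> V * V).

Fixpoint walk (u w : V) (p : seq E) : bool :=
  match p with
  | [::] => u == w
  | e :: p' => ((ends e).1 == u) && walk (ends e).2 w p'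
            || ((ends e).2 == u) && walk (ends e).1 w p'
  end.

Definition is_path (u w : V) (p : seq E) : bool :=
  [&& walk u w p, uniq p & 0 < size p].

Variable N : nat.
Variable Pset : 'I_N -> seq (seq E).

Definition Lmax : nat := \max_(j < N) \max_(q <- Pset j) size q.

Definition bucket (q : seq E) : nat := trunc_log 2 (size q).

Definition Dbar (q : seq E) : nat := 2 ^ (bucket q).+1 - 1.

Definition routing := 'I_N -> seq E.

Definition Cbar_eq (p : routing) (e : E) (q : seq E) : nat :=
  #|[set j : 'I_N | (e \in p j) && (bucket (p j) == bucket q)]|.

Definition Cbar (p : routing) (q : seq E) : nat := \max_(e <- q) Cbar_eq p e q.

Definition pc (p : routing) (i : 'I_N) : nat := Cbar p (p i) + Dbar (p i).

Definition upd (p : routing) (i : 'I_N) (q : seq E) : routing :=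
  fun j => if j == i then q else p j.

Definition greedy_move (p p' : routing) (i : 'I_N) : Prop :=
  exists2 q, q \in Pset i & p' = upd p i q /\ pc p' i < pc p i.

Definition rlen : nat := N + 2 * Lmax - 1.

Definition mcount (p : routing) (j : nat) : nat := #|[set i : 'I_N | pc p i == j]|.

Definition Mlt (p' p : routing) : Prop :=
  exists j, [/\ 1 <= j <= rlen,
    (forall k, j < k <= rlen -> mcount p' k = mcount p k) &
    mcount p' j < mcount p j].

End Routing.

(* Main.v *)
Require Import Defs.
From mathcomp Require Import all_boot.

Set Implicit Arguments.
Section H.
Variables (E : finType) (N : nat).

Lemma Cbar_eq_sub (p : routing E N) i (q : seq E) (e : E) (r : seq E) :
  ~~ ((e \in q) && (bucket q == bucket r)) ->
  Cbar_eq (upd p i q) e r <= Cbar_eq p e r.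
Proof.
move=> H; apply: subset_leq_card; apply/subsetP=> x.
rewrite !inE /upd; case: (x == i) => //.
by move=> /andP[ex /eqP eb]; move: H; rewrite ex eb eqxx.
Qed.

Lemma key (p : routing E N) i (q : seq E) j :
  pc (upd p i q) j <= pc p j \/ pc (upd p i q) j <= pc (upd p i q) i.
Proof.
case: (eqVneq j i) => [->|ji]; first by right.
have pj : upd p i q j = p j by rewrite /upd (negbTE ji).
have pi : upd p i q i = q by rewrite /upd eqxx.
rewrite /pc pj pi.
case hb: (bucket q == bucket (p j)).
- have : Cbar (upd p i q) (p j) <= maxn (Cbar p (p j)) (Cbar (upd p i q) q).
    apply/bigmax_leqP_seq => e ep _.
    case eq: (e \in q).
    + rewrite leq_max; apply/orP; right.
      have -> : Cbar_eq (upd p i q) e (p j) = Cbar_eq (upd p i q) e q.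
        by rewrite /Cbar_eq (eqP hb).
      rewrite /Cbar; by apply: leq_bigmax_seq.
    + rewrite leq_max; apply/orP; left.
      have hs : ~~ ((e \in q) && (bucket q == bucket (p j))) by rewrite eq.
      apply: (leq_trans (Cbar_eq_sub p i q e (p j) hs)).
      rewrite /Cbar; by apply: leq_bigmax_seq.
  rewrite leq_max => /orP[h1|h2].
    by left; rewrite leq_add2r.
  by right; rewrite /Dbar (eqP hb) leq_add2r.
- left; rewrite leq_add2r; apply/bigmax_leqP_seq => e ep _.
  have hs : ~~ ((e \in q) && (bucket q == bucket (p j))) by rewrite hb andbF.
  apply: (leq_trans (Cbar_eq_sub p i q e (p j) hs)).
  rewrite /Cbar; by apply: leq_bigmax_seq.
Qed.

Lemma Cbar_le (p : routing E N) q : Cbar p q <= N.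
Proof.
apply/bigmax_leqP_seq => e _ _.
by apply: leq_trans (max_card _) _; rewrite card_ord.
Qed.

End H.

Theorem mainTheorem9 (V E : finType) (ends : E -> V * V) (N : nat) (HN : 0 < N)
  (u w : 'I_N -> V) (Pset : 'I_N -> seq (seq E))
  (HPne : forall i, Pset i != [::])
  (HPpath : forall i q, q \in Pset i -> is_path ends (u i) (w i) q)
  (p : routing E N) (Hp : forall i, p i \in Pset i)
  (p' : routing E N) (i : 'I_N) (Hmove : greedy_move Pset p p' i) :
  Mlt Pset p' p.
Proof.
case: Hmove => q qP [-> Hlt].
set p2 := upd p i q in Hlt *.
have K j : pc p2 j <= pc p j \/ pc p2 j < pc p i.
  case: (key p i q j) => h; [by left | right; exact: leq_ltn_trans h Hlt].
pose m := \max_(j | pc p2 j < pc p j) pc p j.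
have im : pc p i <= m by exact: (@leq_bigmax_cond _ (fun j => pc p2 j < pc p j) (fun j => pc p j) i Hlt).
have dm j : pc p2 j < pc p j -> pc p j <= m.
  by move=> h; exact: (@leq_bigmax_cond _ (fun j => pc p2 j < pc p j) (fun j => pc p j) j h).
have ch j : pc p2 j != pc p j -> pc p2 j < m /\ pc p j <= m.
  move=> ne; case: (K j) => h.
    have h' : pc p2 j < pc p j by rewrite ltn_neqAle ne h.
    by split; [exact: leq_trans h' (dm j h') | exact: dm].
  split; first exact: leq_trans h im.
  case: (leqP (pc p j) (pc p2 j)) => h2.
    by apply: leq_trans (ltnW (leq_trans h im)).
  exact: dm.
have [j0 j0lt j0m] : exists2 j0, pc p2 j0 < pc p j0 & pc p j0 = m.
  have c0 : 0 < #|[pred j | pc p2 j < pc p j]| by apply/card_gt0P; exists i.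
  case: (eq_bigmax_cond (fun j => pc p j) c0) => j0 h1 h2.
  by exists j0 => //; rewrite /m; symmetry; exact: h2.
have bound j : pc p j <= rlen Pset.
  have qs := HPpath j _ (Hp j).
  move: qs => /and3P[_ _ sz].
  have sL : size (p j) <= Lmax Pset.
    rewrite /Lmax (bigD1 j) //= leq_max; apply/orP; left.
    by apply: leq_bigmax_seq.
  rewrite /pc /rlen.
  have hD : Dbar (p j) <= 2 * Lmax Pset - 1.
    rewrite /Dbar /bucket; apply: leq_sub2r; rewrite expnS leq_mul2l /=.
    exact: leq_trans (trunc_logP (isT : 1 < 2) sz) sL.
  rewrite -addnBA ?muln_gt0 /= ?(leq_trans sz sL) //.
  exact: leq_add (Cbar_le _ _) hD.
exists m; split.
- apply/andP; split; last by rewrite -j0m bound.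
  rewrite -j0m /pc addn_gt0 /Dbar subn_gt0 expnS; apply/orP; right.
  case: (2 ^ _) (expn_gt0 2 (bucket (p j0))) => // n _.
  by rewrite mulnS; apply: ltn_addr.
- move=> k /andP[mk _]; rewrite /mcount; apply: eq_card => j; rewrite !inE.
  case: (eqVneq (pc p2 j) (pc p j)) => [->//|ne].
  case: (ch j ne) => a b.
  have -> : (pc p2 j == k) = false by apply/negbTE; rewrite neq_ltn (ltn_trans a mk).
  by apply/esym/negbTE; rewrite neq_ltn (leq_ltn_trans b mk).
- rewrite /mcount; apply: proper_card; apply/properP; split.
    apply/subsetP => j; rewrite !inE => /eqP h.
    case: (eqVneq (pc p2 j) (pc p j)) => [<-|ne]; first by rewrite h.
    by case: (ch j ne) => a _; rewrite h ltnn in a.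
  exists j0; rewrite !inE ?j0m ?eqxx //.
  by rewrite -j0m neq_ltn j0lt.
Qed.
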